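(* Let $M\ge 2$, $\epsilon>0$, and rates $R_1,\dots,R_M>0$ with order statistics $R_{(1)}\le\dots\le R_{(M)}$, so $R_{(M)}=\max\{R_1,\dots,R_M\}$; set $R_{key}=\sum_{i=1}^{M-1}R_{(i)}$. Let $W_1,\dots,W_M$ be independent with $W_i$ uniform on $\mathcal W_i=\{1,\dots,2^{nR_i}\}$, and $W^M=(W_1,\dots,W_M)$. Let $\mathcal C$ be a random codebook obtained by partitioning $\mathcal W^M=\mathcal W_1\times\dots\times\mathcal W_M$ uniformly at random into $2^{n(R_{key}-\epsilon)}$ bins, each containing $2^{n(R_{(M)}+\epsilon)}$ elements (independently of $W^M$), and let $K_A$ be the index of the bin containing $W^M$. Then for every $m\in\{1,\dots,M\}$ and all sufficiently large $n$, $$H(W^M\mid W_m,K_A,\mathcal C)\le n\big(R_{(M)}-R_m+\delta(\epsilon)\big),$$ where $\delta(\epsilon)\to0$ as $\epsilon\to0$.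
   Context: Conditioning on $\mathcal C$ means the entropy is averaged over the random choice of the binning codebook. Exponents such as $2^{nR_i}$ are treated as integers (rounding as needed). *)

(* Defs.v *)
From HB Require Import structures.
From mathcomp Require Import all_boot.
From Stdlib Require Import Reals.

Set Implicit Arguments.
Unset Strict Implicit.
Unset Printing Implicit Defensive.

Definition log2 (x : R) : R := (ln x / ln 2)%R.

Definition Rsum (I : finType) (F : I -> R) : R := \big[Rplus/0%R]_(i : I) F i.

(* R_(M) = max of the rates (the rates are positive, so 0 is a neutral start) *)
Definition Rmaxf (M : nat) (r : 'I_M -> R) : R := \big[Rmax/0%R]_(i : 'I_M) r i.

(* R_key = sum of the M-1 smallest rates = total sum minus the largest one *)
Definition Rkey (M : nat) (r : 'I_M -> R) : R := (Rsum r - Rmaxf r)%R.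

(* ---------- rounding convention: 2^{n x} is read as 2^{floor(n x)} ---------- *)

Definition rate_exp (n : nat) (x : R) : nat := Z.to_nat (Int_part (INR n * x)).

Definition msg_exp (M : nat) (r : 'I_M -> R) (n : nat) (i : 'I_M) : nat :=
  rate_exp n (r i).
Definition msg_size (M : nat) (r : 'I_M -> R) (n : nat) (i : 'I_M) : nat :=
  2 ^ msg_exp r n i.
Definition tot_exp (M : nat) (r : 'I_M -> R) (n : nat) : nat :=
  \sum_(i < M) msg_exp r n i.

(* number of bins = 2^{floor(n (R_key - eps))} (capped so that bins can exist);
   bin size = |W^M| / number of bins, which is 2^{n (R_(M)+eps)} up to rounding *)
Definition bin_exp (M : nat) (r : 'I_M -> R) (eps : R) (n : nat) : nat :=
  minn (rate_exp n (Rkey r - eps)) (tot_exp r n).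
Definition nbins (M : nat) (r : 'I_M -> R) (eps : R) (n : nat) : nat :=
  2 ^ bin_exp r eps n.
Definition bin_size (M : nat) (r : 'I_M -> R) (eps : R) (n : nat) : nat :=
  2 ^ (tot_exp r n - bin_exp r eps n).

Definition msg_tuple (M : nat) (r : 'I_M -> R) (n : nat) : finType :=
  {dffun forall i : 'I_M, 'I_(msg_size r n i)}.

Definition is_binning (M : nat) (r : 'I_M -> R) (eps : R) (n : nat)
  (f : {ffun msg_tuple r n -> 'I_(nbins r eps n)}) : bool :=
  [forall b : 'I_(nbins r eps n), #|[pred x | f x == b]| == bin_size r eps n].

Definition codebook (M : nat) (r : 'I_M -> R) (eps : R) (n : nat) : finType :=
  {f : {ffun msg_tuple r n -> 'I_(nbins r eps n)} | is_binning f}.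

(* sample space: (C, W^M), uniform (C uniform over binnings, W^M uniform,
   independent of each other; W_i independent uniform) *)
Definition sample (M : nat) (r : 'I_M -> R) (eps : R) (n : nat) : finType :=
  (codebook r eps n * msg_tuple r n)%type.

Definition probU (O : finType) (E : pred O) : R := (INR #|E| / INR #|O|)%R.

(* conditional entropy H(X | Y) in bits, (0 log 0 = 0 convention automatic) *)
Definition cond_entropy (O A B : finType) (X : O -> A) (Y : O -> B) : R :=
  Rsum (fun a : A => Rsum (fun b : B =>
    let pab := probU [pred w | (X w == a) && (Y w == b)] in
    let pb  := probU [pred w | Y w == b] in
    (pab * log2 (pb / pab))%R)).

Definition rv_WM (M : nat) (r : 'I_M -> R) (eps : R) (n : nat)
  (w : sample r eps n) : msg_tuple r n := w.2.

Definition rv_K (M : nat) (r : 'I_M -> R) (eps : R) (n : nat)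
  (w : sample r eps n) : 'I_(nbins r eps n) := (val w.1) w.2.

Definition rv_cond (M : nat) (r : 'I_M -> R) (eps : R) (n : nat) (m : 'I_M)
  (w : sample r eps n) : ('I_(msg_size r n m) * 'I_(nbins r eps n) * codebook r eps n)%type :=
  (w.2 m, rv_K w, w.1).

(* Main.v *)
Require Import Defs.
From HB Require Import structures.
From mathcomp Require Import all_boot.
From Stdlib Require Import Reals.
From mathcomp Require Import perm.
From Stdlib Require Import Lra.
From mathcomp Require Import zify.
Set Warnings "-notation-overridden".

Lemma cardE_sum (T : finType) (P : pred T) : #|P| = \sum_(i : T) (P i : nat).
Proof.
rewrite -sum1_card big_mkcond /=; apply: eq_bigr => i _.
by rewrite -[P i]/(i \in P); case: (i \in P).
Qed.

Lemma card_perm_pred (T : finType) (s : {perm T}) (P : pred T) :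
  #|[pred x | P (s x)]| = #|P|.
Proof.
rewrite !cardE_sum [RHS](reindex_inj (@perm_inj _ s)) /=.
by apply: eq_bigr => i _.
Qed.

Section Comb.
Variables (M : nat) (r : 'I_M -> R) (eps : R) (n : nat) (m : 'I_M).
Notation W := (msg_tuple r n).
Notation Cb := (codebook r eps n).

Definition Ncc (a a' : W) : nat := #|[pred c : Cb | val c a' == val c a]|.
Definition cnt (c : Cb) (a : W) : nat :=
  #|[pred a' : W | (a' m == a m) && (val c a' == val c a)]|.

Lemma comp_binning (c : Cb) (s : {perm W}) :
  is_binning [ffun x => val c (s x)].
Proof.
apply/forallP => k.
have E : #|[pred x | [ffun x => val c (s x)] x == k]| = #|[pred y | val c y == k]|.
  rewrite -(card_perm_pred _ s (fun y => val c y == k)).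
  by apply: eq_card => x; rewrite !inE ffunE.
rewrite E.
by have /forallP := valP c; move=> /(_ k).
Qed.

Definition compc (s : {perm W}) (c : Cb) : Cb := Sub _ (comp_binning c s).

Lemma Ncc_sym (a a' b : W) : a' != a -> b != a -> Ncc a a' = Ncc a b.
Proof.
move=> Ha' Hb.
pose s := tperm a' b.
have Hinv : involutive (compc s).
  move=> c; apply: val_inj; apply/ffunP => x.
  by rewrite /compc /= !ffunE /s tpermK.
rewrite /Ncc !cardE_sum (reindex_inj (inv_inj Hinv)).
apply: eq_bigr => c _ /=.
rewrite /compc /= !ffunE /s tpermL tpermD //.
Qed.

Lemma sum_noteq (a : W) :
  \sum_(a' | a' != a) Ncc a a' = #|Cb| * (bin_size r eps n - 1).
Proof.
rewrite /Ncc.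
under eq_bigr => a' _ do rewrite cardE_sum.
rewrite exchange_big /=.
rewrite -sum_nat_const.
apply: eq_bigr => c _.
have H : #|[pred a' | val c a' == val c a]| = bin_size r eps n.
  by have /forallP := valP c; move=> /(_ (val c a)) /eqP.
rewrite cardE_sum (bigD1 a) //= eqxx in H.
by rewrite -H add1n subSS subn0.
Qed.

Definition Fw (w : 'I_(msg_size r n m)) (x : 'I_M) : pred 'I_(msg_size r n x) :=
  [pred y : 'I_(msg_size r n x) | (x != m) || (val y == val w)].

Lemma Fw_card w x : #|Fw w x| = if x == m then 1 else msg_size r n x.
Proof.
case: (eqVneq x m) => [Ex | neq].
  subst x; apply: (eq_card1 (x := w)) => y.
  by rewrite !inE eqxx /=.
rewrite -[RHS](card_ord (msg_size r n x)); apply: eq_card => y.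
by rewrite !inE neq.
Qed.

Lemma fiber_family w : #|[pred a : W | a m == w]| = #|(finfun.family (Fw w) : simpl_pred W)|.
Proof.
apply: eq_card => a; rewrite [in LHS]inE.
apply/eqP/familyP => [Hw x | H].
  rewrite inE; case: (eqVneq x m) => [Ex | neq]; last by apply/orP; left.
  by subst x; rewrite Hw eqxx.
by apply: val_inj; apply/eqP; have := H m; rewrite inE eqxx.
Qed.

Lemma fiber_const w w' : #|[pred a : W | a m == w]| = #|[pred a : W | a m == w']|.
Proof.
rewrite !fiber_family !card_family; congr foldr.
by apply: eq_map => x; rewrite !Fw_card.
Qed.

Lemma fiber_mul (a0 : W) : #|[pred a : W | a m == a0 m]| * msg_size r n m = #|W|.
Proof.
transitivity (\sum_(a : W) 1); last by rewrite sum1_card.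
rewrite (partition_big (fun a : W => a m) predT) //=.
rewrite (eq_bigr (fun _ => #|[pred a : W | a m == a0 m]|)).
  by rewrite sum_nat_const card_ord mulnC.
move=> w _; rewrite (fiber_const _ w) -sum1_card.
by apply: eq_bigl => a.
Qed.

Definition eqm (a a' : W) : nat := (a' m == a m).

Lemma pow2_pos k : 0 < Nat.pow 2 k.
Proof. elim: k => //= k IH; lia. Qed.

Lemma T_eq : \sum_(c : Cb) \sum_(a : W) cnt c a =
  \sum_(a : W) \sum_(a' : W) eqm a a' * Ncc a a'.
Proof.
rewrite exchange_big; apply: eq_bigr => a _.
rewrite /cnt; under eq_bigr => c _ do rewrite cardE_sum.
rewrite exchange_big; apply: eq_bigr => a' _.
rewrite /Ncc cardE_sum big_distrr; apply: eq_bigr => c _ /=.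
by rewrite /eqm mulnb.
Qed.

Lemma X_bound a : (\sum_(a' : W) eqm a a' * Ncc a a') * msg_size r n m <=
   #|Cb| * (msg_size r n m + bin_size r eps n).
Proof.
rewrite (bigD1 a) //= /eqm eqxx mul1n.
have Naa : Ncc a a = #|Cb|.
  by rewrite /Ncc; apply: eq_card => c; rewrite !inE eqxx.
rewrite Naa.
set cm := #|[pred a' : W | a' m == a m]|.
have Hcm : cm * msg_size r n m = #|W| := fiber_mul a.
have Hcnt : \sum_(a' | a' != a) (a' m == a m : nat) = cm - 1.
  by rewrite /cm cardE_sum [in RHS](bigD1 a) //= eqxx /= add1n subSS subn0.
have smp : 0 < msg_size r n m by exact: pow2_pos.
have bsp : 0 < bin_size r eps n by exact: pow2_pos.
set Y := \sum_(a' | a' != a) _.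
case: (leqP cm 1) => Hc.
  have : Y <= (cm - 1) * #|Cb|.
    rewrite -Hcnt big_distrl /=; apply: leq_sum => a' _.
    by apply: leq_mul => //; exact: max_card.
  have -> : cm - 1 = 0 by lia.
  rewrite mul0n leqn0 => /eqP ->.
  by rewrite addn0 leq_mul2l leq_addr orbT.
case: (pickP (fun a' : W => a' != a)) => [b Hb | none]; last first.
  by move: Hcnt; rewrite big_pred0 //; lia.
have HY : Y = (cm - 1) * Ncc a b.
  rewrite -Hcnt big_distrl /=; apply: eq_bigr => a' Ha'.
  by rewrite (Ncc_sym _ _ _ Ha' Hb).
have HN : (#|W| - 1) * Ncc a b = #|Cb| * (bin_size r eps n - 1).
  rewrite -(sum_noteq a) (eq_bigr (fun _ => Ncc a b)); last first.
    by move=> a' Ha'; rewrite (Ncc_sym _ _ _ Ha' Hb).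
  rewrite sum_nat_const; congr (_ * _).
  by rewrite subn1 -(cardC1 a); apply: eq_card => i; rewrite !inE.
rewrite HY.
have Wc2 : 1 < #|W| by rewrite -Hcm (leq_trans Hc) // leq_pmulr.
have key : (cm - 1) * Ncc a b * msg_size r n m <= #|Cb| * bin_size r eps n.
  rewrite -(@leq_pmul2l (#|W| - 1)); last by rewrite subn_gt0.
  have -> : (#|W| - 1) * ((cm - 1) * Ncc a b * msg_size r n m) =
     ((cm - 1) * msg_size r n m) * (#|Cb| * (bin_size r eps n - 1)).
    by rewrite -HN; nia.
  apply: leq_mul.
    by rewrite mulnBl mul1n Hcm leq_sub2l.
  by rewrite leq_mul2l leq_subr orbT.
by rewrite mulnDl mulnDr leq_add2l.
Qed.

Lemma T_bound : (\sum_(c : Cb) \sum_(a : W) cnt c a) * msg_size r n m <=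
  #|Cb| * #|W| * (msg_size r n m + bin_size r eps n).
Proof.
rewrite T_eq big_distrl /=.
apply: (@leq_trans (\sum_(a : W) #|Cb| * (msg_size r n m + bin_size r eps n))).
  by apply: leq_sum => a _; exact: X_bound.
by rewrite sum_nat_const mulnA (mulnC #|xpredT|).
Qed.
End Comb.

Set Implicit Arguments.
Unset Strict Implicit.

HB.instance Definition _ := Monoid.isComLaw.Build R 0%R Rplus (fun x y z => esym (Rplus_assoc x y z)) Rplus_comm Rplus_0_l.
HB.instance Definition _ := Monoid.isMulLaw.Build R 0%R Rmult Rmult_0_l Rmult_0_r.
HB.instance Definition _ := Monoid.isAddLaw.Build R Rmult Rplus Rmult_plus_distr_r Rmult_plus_distr_l.

Lemma Rsum_le (I : finType) (F G : I -> R) :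
  (forall i, F i <= G i)%R -> (Rsum F <= Rsum G)%R.
Proof.
move=> H; rewrite /Rsum; apply: (big_ind2 (fun x y => x <= y)%R) => //.
  exact: Rle_refl.
by move=> ? ? ? ? ? ?; apply: Rplus_le_compat.
Qed.

Lemma Rsum_add (I : finType) (F G : I -> R) :
  Rsum (fun i => F i + G i)%R = (Rsum F + Rsum G)%R.
Proof. by rewrite /Rsum big_split. Qed.

Lemma Rsum_scal (I : finType) (F : I -> R) a :
  Rsum (fun i => a * F i)%R = (a * Rsum F)%R.
Proof. by rewrite /Rsum big_distrr. Qed.

Lemma iter_Rplus k c : ssrnat.iter k (Rplus c) 0%R = (INR k * c)%R.
Proof. elim: k => [|k IH]; first by rewrite /=; lra. rewrite iterS IH S_INR; lra. Qed.

Lemma Rsum_const (I : finType) c : Rsum (fun _ : I => c) = (INR #|I| * c)%R.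
Proof. by rewrite /Rsum big_const iter_Rplus. Qed.

Lemma INR_sum (I : finType) (f : I -> nat) :
  INR (\sum_(i : I) f i) = Rsum (fun i => INR (f i)).
Proof.
rewrite /Rsum; apply: (big_morph INR) => //.
by move=> x y; rewrite -plus_INR.
Qed.

Lemma Rsum_ge0 (I : finType) (F : I -> R) : (forall i, 0 <= F i)%R -> (0 <= Rsum F)%R.
Proof.
move=> H; have := @Rsum_le I (fun _ => 0%R) F H.
by rewrite Rsum_const Rmult_0_r.
Qed.

Lemma Rsum_pos (I : finType) (F : I -> R) (i0 : I) :
  (forall i, 0 < F i)%R -> (0 < Rsum F)%R.
Proof.
move=> H; rewrite /Rsum (bigD1 i0) //=.
have : (0 <= \big[Rplus/0%R]_(i | i != i0) F i)%R.
  apply: (big_ind (fun x => 0 <= x)%R) => //; first exact: Rle_refl.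
  by move=> x y; apply: Rplus_le_le_0_compat.
  by move=> i _; apply: Rlt_le.
by have := H i0; lra.
Qed.

Lemma ln2_pos : (0 < ln 2)%R.
Proof. rewrite -ln_1; apply: ln_increasing; lra. Qed.

Lemma ln_le_m1 x : (0 < x)%R -> (ln x <= x - 1)%R.
Proof. move=> Hx; have := exp_ineq1_le (ln x); rewrite exp_ln //; lra. Qed.

Lemma log2_le x y : (0 < x)%R -> (x <= y)%R -> (log2 x <= log2 y)%R.
Proof.
move=> Hx Hxy; rewrite /log2 /Rdiv; apply: Rmult_le_compat_r.
  by apply: Rlt_le; apply: Rinv_0_lt_compat; exact: ln2_pos.
case: (Rle_lt_or_eq_dec _ _ Hxy) => [H|->]; last exact: Rle_refl.
by apply: Rlt_le; apply: ln_increasing.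
Qed.

Lemma log2_pow k : log2 (INR (Nat.pow 2 k)) = INR k.
Proof.
have E : INR 2 = 2%R by rewrite /=; lra.
rewrite /log2 pow_INR E ln_pow; last lra.
have := ln2_pos => ?; field; lra.
Qed.

Lemma jensen (I : finType) (x : I -> R) (i0 : I) :
  (forall i, 0 < x i)%R ->
  (Rsum (fun i => log2 (x i)) <= INR #|I| * log2 (Rsum x / INR #|I|))%R.
Proof.
move=> Hx.
have NI : (0 < INR #|I|)%R.
  apply: lt_0_INR; apply/ltP; apply/card_gt0P; by exists i0.
set N := INR #|I|.
have Sp := Rsum_pos i0 Hx.
set mu := (Rsum x / N)%R.
have mup : (0 < mu)%R by rewrite /mu; apply: Rdiv_lt_0_compat.
have H1 : (Rsum (fun i => ln (x i) + - ln mu) <= Rsum (fun i => / mu * x i + (-1)))%R.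
  apply: Rsum_le => i.
  have Hq := Rdiv_lt_0_compat _ _ (Hx i) mup.
  have E : ln (x i) = (ln mu + ln (x i / mu))%R.
    rewrite -ln_mult //; congr ln; field; lra.
  have := ln_le_m1 Hq; rewrite E /Rdiv; lra.
rewrite !Rsum_add Rsum_scal !Rsum_const in H1.
have E : (/ mu * Rsum x + N * -1 = 0)%R.
  rewrite /mu; field; split; apply: Rgt_not_eq; assumption.
rewrite E in H1.
have L : (Rsum (fun i => ln (x i)) <= N * ln mu)%R by rewrite -/N in H1; lra.
rewrite /log2.
have -> : Rsum (fun i => ln (x i) / ln 2)%R = (/ ln 2 * Rsum (fun i => ln (x i)))%R.
  rewrite -Rsum_scal; rewrite /Rsum; apply: eq_bigr => i _; rewrite /Rdiv; lra.
have := ln2_pos => l2.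
rewrite /Rdiv -/mu.
have : (/ ln 2 * Rsum (fun i => ln (x i)) <= / ln 2 * (N * ln mu))%R.
  apply: Rmult_le_compat_l => //; apply: Rlt_le; exact: Rinv_0_lt_compat.
lra.
Qed.

Lemma Rmax_seq (M : nat) (r : 'I_M -> R) (s : seq 'I_M) :
  (0 <= \big[Rmax/0%R]_(i <- s) r i)%R /\
  (forall m, m \in s -> r m <= \big[Rmax/0%R]_(i <- s) r i)%R.
Proof.
elim: s => [|j s [IH1 IH2]]; rewrite ?big_nil ?big_cons.
  by split; [exact: Rle_refl | move=> m].
split; first by apply: Rle_trans (Rmax_r _ _).
move=> m; rewrite in_cons => /orP [/eqP -> | Hm]; first exact: Rmax_l.
by apply: Rle_trans (IH2 m Hm) (Rmax_r _ _).
Qed.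

Lemma Rmaxf_ge (M : nat) (r : 'I_M -> R) m : (r m <= Rmaxf r)%R.
Proof.
rewrite /Rmaxf; have [_ H] := Rmax_seq r (index_enum 'I_M).
by apply: H; exact: mem_index_enum.
Qed.

Lemma INR_to_nat_ge z : (IZR z <= INR (Z.to_nat z))%R.
Proof.
case: z => [|p|p] /=.
- exact: Rle_refl.
- by rewrite INR_IZR_INZ Znat.positive_nat_Z; exact: Rle_refl.
- apply: Rlt_le; exact: IZR_lt.
Qed.

Lemma to_nat_Int_part_ge x : (x - 1 <= INR (Z.to_nat (Int_part x)))%R.
Proof.
have [_ H] := base_Int_part x.
have := INR_to_nat_ge (Int_part x); lra.
Qed.

Lemma to_nat_Int_part_le x : (0 <= x)%R -> (INR (Z.to_nat (Int_part x)) <= x)%R.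
Proof.
move=> Hx; have [H _] := base_Int_part x.
case E: (Int_part x) => [|p|p] /=.
- exact: Hx.
- by rewrite INR_IZR_INZ Znat.positive_nat_Z -E.
- exact: Hx.
Qed.

Lemma exp_bound (M : nat) (r : 'I_M -> R) (eps : R) (n : nat) (m : 'I_M) :
  (forall i, 0 < r i)%R -> (0 < eps)%R ->
  (INR ((tot_exp r n - bin_exp r eps n) - msg_exp r n m).+1 <=
     INR n * (Rmaxf r - r m + eps) + 3)%R.
Proof.
move=> Hr He.
have n0 := pos_INR n.
have Hmax := Rmaxf_ge r m.
have Hrm := Hr m.
have Htot : (INR (tot_exp r n) <= INR n * Rsum r)%R.
  rewrite /tot_exp INR_sum -Rsum_scal; apply: Rsum_le => i.
  rewrite /msg_exp /rate_exp; apply: to_nat_Int_part_le.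
  by apply: Rmult_le_pos => //; apply: Rlt_le.
have Hfl := to_nat_Int_part_ge (INR n * (Rkey r - eps)).
have Hme := to_nat_Int_part_ge (INR n * r m).
have He1 : (INR (tot_exp r n - bin_exp r eps n) <= INR n * (Rmaxf r + eps) + 1)%R.
  rewrite /bin_exp.
  case: (leqP (rate_exp n (Rkey r - eps)%R) (tot_exp r n)) => H.
    rewrite minus_INR; last by apply/leP.
    move: Hfl; rewrite /rate_exp /Rkey => Hfl.
    rewrite /Rkey in Htot; lra.
  rewrite subnn /=.
  have : (0 <= INR n * (Rmaxf r + eps))%R by apply: Rmult_le_pos => //; lra.
  lra.
set e := tot_exp r n - bin_exp r eps n in He1 *.
case: (leqP (msg_exp r n m) e) => H.
  rewrite S_INR minus_INR; last by apply/leP.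
  move: Hme; rewrite /msg_exp /rate_exp => Hme.
  lra.
have -> : e - msg_exp r n m = 0 by apply/eqP; rewrite subn_eq0 ltnW.
have : (0 <= INR n * (Rmaxf r - r m + eps))%R by apply: Rmult_le_pos => //; lra.
rewrite /=; lra.
Qed.

Lemma sum_pick (A B : finType) (f : B -> A) (g : (A * B)%type -> R) :
  \big[Rplus/0%R]_(y : (A * B)%type) (if y.1 == f y.2 then g y else 0%R) =
  \big[Rplus/0%R]_(b : B) g (f b, b).
Proof.
transitivity (\big[Rplus/0%R]_(y : (A * B)%type)
   (fun x b => if x == f b then g (x, b) else 0%R) y.1 y.2).
  by apply: eq_bigr => -[x b].
rewrite -(pair_bigA _ (fun x b => if x == f b then g (x, b) else 0%R)) /= exchange_big.
apply: eq_bigr => b _.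
by rewrite -big_mkcond big_pred1_eq.
Qed.

Lemma natpowE k : Nat.pow 2 k = expn 2 k.
Proof. by elim: k => // k IH; rewrite expnS -IH. Qed.

Lemma pow_split e me :
  Nat.pow 2 me + Nat.pow 2 e <= Nat.pow 2 me * Nat.pow 2 (e - me).+1.
Proof.
rewrite !natpowE expnS.
have h1 : expn 2 e <= expn 2 me * expn 2 (e - me).
  by rewrite -expnD leq_exp2l //; lia.
have h2 : 0 < expn 2 (e - me) by rewrite expn_gt0.
have h3 : 0 < expn 2 me by rewrite expn_gt0.
nia.
Qed.

Section Ent.
Variables (M : nat) (r : 'I_M -> R) (eps : R) (n : nat) (m : 'I_M).
Notation W := (msg_tuple r n).
Notation Cb := (codebook r eps n).
Notation O := (sample r eps n).

Lemma card_pair (P : pred O) : #|P| = \sum_(c : Cb) #|[pred a : W | P (c, a)]|.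
Proof.
rewrite cardE_sum.
transitivity (\sum_(p : (Cb * W)%type) (P (p.1, p.2) : nat)).
  by apply: eq_bigr => -[c a].
rewrite -(pair_bigA _ (fun (c : Cb) (a : W) => (P (c, a) : nat))) /=.
by apply: eq_bigr => c _; rewrite cardE_sum.
Qed.

Lemma L1 (a : W) w k (c : Cb) :
  #|[pred o : O | (rv_WM o == a) && (rv_cond m o == (w, k, c))]| =
  ((a m == w) && (val c a == k) : nat).
Proof.
rewrite card_pair (bigD1 c) //= big1 ?addn0; last first.
  move=> c' Hc'; apply: eq_card0 => a'; rewrite !inE /rv_WM /rv_cond /rv_K /=.
  by rewrite !xpair_eqE (negbTE Hc') !andbF.
case: (boolP ((a m == w) && (val c a == k))) => H /=.
  apply: (eq_card1 (x := a)) => a'; rewrite !inE /rv_WM /rv_cond /rv_K /=.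
  rewrite !xpair_eqE eqxx andbT.
  by case: (eqVneq a' a) => [-> | //]; rewrite H.
apply: eq_card0 => a'; rewrite !inE /rv_WM /rv_cond /rv_K /=.
rewrite !xpair_eqE eqxx andbT.
by case: (eqVneq a' a) => [-> | //]; rewrite (negbTE H).
Qed.

Lemma L2 w k (c : Cb) :
  #|[pred o : O | rv_cond m o == (w, k, c)]| =
  #|[pred a' : W | (a' m == w) && (val c a' == k)]|.
Proof.
rewrite card_pair (bigD1 c) //= big1 ?addn0; last first.
  move=> c' Hc'; apply: eq_card0 => a'; rewrite !inE /rv_cond /rv_K /=.
  by rewrite !xpair_eqE (negbTE Hc') !andbF.
apply: eq_card => a'; rewrite !inE /rv_cond /rv_K /=.
by rewrite !xpair_eqE eqxx andbT.
Qed.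

Lemma H_formula : (0 < #|O|)%N ->
  cond_entropy (@rv_WM M r eps n) (@rv_cond M r eps n m) =
  Rsum (fun a : W => Rsum (fun c : Cb => / INR #|O| * log2 (INR (cnt M r eps n m c a))))%R.
Proof.
move=> NOp.
have NO : INR #|O| <> 0%R by apply: not_0_INR; lia.
rewrite /cond_entropy /Rsum; apply: eq_bigr => a _.
transitivity (\big[Rplus/0%R]_(y : ('I_(msg_size r n m) * 'I_(nbins r eps n) * Cb)%type)
  (if y.1 == (a m, val y.2 a) then
   (/ INR #|O| * log2 (INR #|[pred a' : W | (a' m == y.1.1) && (val y.2 a' == y.1.2)]|))%R
   else 0%R)).
  apply: eq_bigr => -[[w k] c] _ /=; rewrite /probU L1 L2.
  rewrite xpair_eqE [w == _]eq_sym [k == _]eq_sym.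
  case: ifP => H /=.
    rewrite /Rdiv Rmult_1_l; congr (Rmult _ (log2 _)); field; exact: NO.
  by rewrite /Rdiv !Rmult_0_l.
by rewrite (sum_pick (fun c : Cb => (a m, val c a))).
Qed.

Lemma H_bound : (0 < #|O|)%N ->
  (cond_entropy (@rv_WM M r eps n) (@rv_cond M r eps n m) <=
   INR ((tot_exp r n - bin_exp r eps n) - msg_exp r n m).+1)%R.
Proof.
move=> NOp.
rewrite H_formula //.
set d := (tot_exp r n - bin_exp r eps n) - msg_exp r n m.
set NO := #|O|.
have NOR : (0 < INR NO)%R by apply: lt_0_INR; apply/ltP.
have cpos : forall (c : Cb) (a : W), (0 < INR (cnt M r eps n m c a))%R.
  move=> c a; apply: lt_0_INR; apply/ltP; apply/card_gt0P; exists a.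
  by rewrite !inE !eqxx.
case/card_gt0P: (NOp) => o _.
set x := fun p : (W * Cb)%type => INR (cnt M r eps n m p.2 p.1).
have E1 : Rsum (fun a : W => Rsum (fun c : Cb => / INR NO * log2 (INR (cnt M r eps n m c a))))%R
   = (/ INR NO * Rsum (fun p => log2 (x p)))%R.
  rewrite -Rsum_scal /Rsum /x.
  rewrite -(pair_bigA _ (fun (a : W) (c : Cb) => / INR NO * log2 (INR (cnt M r eps n m c a)))%R) /=.
  by apply: eq_bigr => a _.
have cardWC : #|{: W * Cb}| = NO by rewrite /NO !card_prod mulnC.
have J := jensen (x := x) (o.2, o.1) (fun p => cpos p.2 p.1).
rewrite cardWC in J.
have E2 : Rsum x = INR (\sum_(c : Cb) \sum_(a : W) cnt M r eps n m c a).
  rewrite exchange_big INR_sum /Rsum /x.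
  rewrite -(pair_bigA _ (fun (a : W) (c : Cb) => INR (cnt M r eps n m c a))) /=.
  by apply: eq_bigr => a _; rewrite INR_sum.
have TB := T_bound M r eps n m.
set T := \sum_(c : Cb) \sum_(a : W) cnt M r eps n m c a in E2 TB.
have TB2 : T <= NO * Nat.pow 2 d.+1.
  have hs : 0 < msg_size r n m by exact: pow2_pos.
  rewrite -(leq_pmul2r hs); apply: (leq_trans TB).
  have -> : #|Cb| * #|W| = NO by rewrite /NO card_prod.
  rewrite -[NO * _ * _]mulnA leq_mul2l; apply/orP; right.
  by rewrite mulnC; exact: pow_split.
rewrite E1.
have NOinv : (0 <= / INR NO)%R by apply: Rlt_le; apply: Rinv_0_lt_compat.
apply: Rle_trans; first exact: (Rmult_le_compat_l _ _ _ NOinv J).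
rewrite -Rmult_assoc Rinv_l; last by apply: Rgt_not_eq.
rewrite Rmult_1_l E2 -(log2_pow d.+1).
have Tpos : (0 < INR T)%R by rewrite -E2; exact: (Rsum_pos (o.2, o.1) (fun p => cpos p.2 p.1)).
apply: log2_le; first by apply: Rdiv_lt_0_compat.
have H : (INR T <= INR NO * INR (Nat.pow 2 d.+1))%R.
  by rewrite -mult_INR; apply: le_INR; apply/leP.
have : (INR T * / INR NO <= INR NO * INR (Nat.pow 2 d.+1) * / INR NO)%R.
  by apply: Rmult_le_compat_r.
have -> : (INR NO * INR (Nat.pow 2 d.+1) * / INR NO = INR (Nat.pow 2 d.+1))%R.
  by field; apply: Rgt_not_eq.
by rewrite /Rdiv.
Qed.

Lemma H_zero : #|O| = 0 ->
  cond_entropy (@rv_WM M r eps n) (@rv_cond M r eps n m) = 0%R.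
Proof.
move=> H0.
have c0 : forall P : pred O, #|P| = 0.
  by move=> P; apply/eqP; rewrite -leqn0 -H0 max_card.
rewrite /cond_entropy /Rsum big1 // => a _; rewrite big1 // => y _.
by rewrite /probU !c0 /Rdiv !Rmult_0_l.
Qed.
End Ent.

Theorem lemma1 (M : nat) (HM : (2 <= M)%N) (r : 'I_M -> R)
  (Hr : forall i : 'I_M, (0 < r i)%R) :
  exists delta : R -> R,
    (forall eta : R, (0 < eta)%R ->
       exists e0 : R, (0 < e0)%R /\
         forall eps : R, (0 < eps)%R -> (eps < e0)%R -> (Rabs (delta eps) < eta)%R) /\
    (forall eps : R, (0 < eps)%R -> forall m : 'I_M,
       exists N : nat, forall n : nat, (N <= n)%N ->
         (cond_entropy (@rv_WM M r eps n) (@rv_cond M r eps n m)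
           <= INR n * (Rmaxf r - r m + delta eps))%R).
Proof.
exists (fun e => 2 * e)%R; split.
  move=> eta Heta; exists (eta / 2)%R; split; first lra.
  move=> e He1 He2; rewrite Rabs_right; lra.
move=> eps Heps m.
have [N HN] := INR_archimed eps 3 Heps.
exists N => n Hn.
have Hn' : (INR N <= INR n)%R by apply: le_INR; apply/leP.
have Hmax := Rmaxf_ge r m.
have n0 := pos_INR n.
have P0 : (0 <= INR n * (Rmaxf r - r m + 2 * eps))%R.
  by apply: Rmult_le_pos => //; lra.
case: (posnP #|sample r eps n|) => H0.
  by rewrite H_zero.
apply: Rle_trans; first exact: H_bound.
apply: Rle_trans; first exact: exp_bound.
have : (INR N * eps <= INR n * eps)%R by apply: Rmult_le_compat_r => //; lra.
lra.
Qed.
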